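(* For any labeled test set $S_{\mathrm{test}} \subseteq \{\pm1\}^n\times\{\pm1\}$, depth $d \ge 0$, mapping $\mathcal{H}$ from restrictions to hypotheses, and restriction $\rho$, the procedure $\mathrm{FindTree}(S_{\mathrm{test}}, d, \mathcal{H}, \rho)$ returns a depth-$d$ tree $T$ satisfying \[ \mathrm{error}(T \circ_\rho \mathcal{H}, (S_{\mathrm{test}})_\rho) = \min_{T' \text{ a depth-}d\text{ decision tree}} \mathrm{error}(T' \circ_\rho \mathcal{H}, (S_{\mathrm{test}})_\rho), \] where the minimum ranges over depth-$d$ decision trees querying only coordinates $i$ with $\rho_i=\star$.
   Context: A restriction is $\rho\in\{\pm1,\star\}^n$; $x\in\rho$ means $x_i=\rho_i$ or $\rho_i=\star$ for all $i$; $\rho\cap(x_i=b)$ is $\rho$ with coordinate $i$ (previously $\star$) set to $b$; for two restrictions fixing disjoint coordinate sets, $\rho\cap\ell$ fixes both sets of coordinates. For a labeled set $S$, $S_\rho=\{(x,y)\in S:x\in\rho\}$, and $\mathrm{error}(h,S)$ is the fraction of $(x,y)\in S$ with $h(x)\ne y$. A depth-$d$ decision tree is a set of $2^d$ leaf restrictions defined recursively: depth $0$ is the single all-$\star$ restriction; depth $d\ge1$ has a root coordinate $i$ and two depth-$(d-1)$ subtrees not fixing $i$, whose leaves get coordinate $i$ set to $-1$ and $+1$ respectively. For a tree $T$ querying only coordinates free in $\rho$, $T\circ_\rho\mathcal{H}$ maps $x\in\rho$ to $\mathcal{H}(\rho\cap\ell)(x)$, where $\ell$ is the leaf of $T$ with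 $x\in\ell$. Procedure $\mathrm{FindTree}(S_{\mathrm{test}},d,\mathcal{H},\rho)$: if $d=0$ return the one-leaf tree; otherwise for each $i$ with $\rho_i=\star$, recursively compute $T_{+1}\leftarrow\mathrm{FindTree}(S_{\mathrm{test}},d-1,\mathcal{H},\rho\cap(x_i=1))$ and $T_{-1}\leftarrow\mathrm{FindTree}(S_{\mathrm{test}},d-1,\mathcal{H},\rho\cap(x_i=-1))$, let $T^{(i)}$ be the tree with root $x_i$ and subtrees $T_{-1}$, $T_{+1}$, and return the $T^{(i)}$ minimizing $\mathrm{error}(T^{(i)}\circ_\rho\mathcal{H},(S_{\mathrm{test}})_\rho)$. *)

(* Defs.v *)
(* Encoding: the value +1 is [true], -1 is [false];
   the restriction value "star" is [None]. *)
From mathcomp Require Import all_boot all_order all_algebra.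
Set Implicit Arguments. Unset Strict Implicit. Unset Printing Implicit Defensive.
Import Order.TTheory GRing.Theory Num.Theory.
Local Open Scope ring_scope.

Definition pt (n : nat) := {ffun 'I_n -> bool}.
Definition rst (n : nat) := {ffun 'I_n -> option bool}.

Definition rstar (n : nat) : rst n := [ffun=> None].

Definition inr (n : nat) (x : pt n) (rho : rst n) : bool :=
  [forall i, if rho i is Some b then x i == b else true].

Definition rset (n : nat) (rho : rst n) (i : 'I_n) (b : bool) : rst n :=
  [ffun j => if j == i then Some b else rho j].

(* rho ∩ l, for restrictions fixing disjoint coordinate sets *)
Definition rcap (n : nat) (rho l : rst n) : rst n :=
  [ffun j => if rho j is Some b then Some b else l j].

Definition sample (n : nat) := {set (pt n * bool)}.

Definition restr_sample (n : nat) (S : sample n) (rho : rst n) : sample n :=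
  [set p in S | inr p.1 rho].

Definition error (n : nat) (h : pt n -> bool) (S : sample n) : rat :=
  #|[set p in S | h p.1 != p.2]|%:R / #|S|%:R.

(* decision trees: [Node i Tm Tp] has root x_i, subtree Tm for x_i = -1
   and Tp for x_i = +1 *)
Inductive dtree (n : nat) : Type :=
| Leaf
| Node of 'I_n & dtree n & dtree n.
Arguments Leaf {n}.

Fixpoint leaves (n : nat) (T : dtree n) : seq (rst n) :=
  match T with
  | Leaf => [:: rstar n]
  | Node i Tm Tp =>
      map (fun l => rset l i false) (leaves Tm) ++
      map (fun l => rset l i true) (leaves Tp)
  end.

Fixpoint queries (n : nat) (T : dtree n) : seq 'I_n :=
  match T with
  | Leaf => [::]
  | Node i Tm Tp => i :: queries Tm ++ queries Tp
  end.

Fixpoint is_tree (n : nat) (d : nat) (T : dtree n) : bool :=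
  match T, d with
  | Leaf, 0 => true
  | Node i Tm Tp, d'.+1 =>
      [&& is_tree d' Tm, is_tree d' Tp, i \notin queries Tm & i \notin queries Tp]
  | _, _ => false
  end.

Definition free_in (n : nat) (rho : rst n) (T : dtree n) : bool :=
  all (fun i => rho i == None) (queries T).

Definition compose (n : nat) (rho : rst n) (T : dtree n)
    (H : rst n -> pt n -> bool) (x : pt n) : bool :=
  let l := head (rstar n) [seq l <- leaves T | inr x l] in
  H (rcap rho l) x.

Definition argmin (A : Type) (f : A -> rat) (s : seq A) : option A :=
  foldr (fun t acc => match acc with
                      | None => Some t
                      | Some u => if f t <= f u then Some t else Some u
                      end) None s.

(* FindTree(S_test, d, H, rho); returns None only when no candidate tree
   exists (no free coordinate at some recursive call). *)
Fixpoint FindTree (n : nat) (S : sample n) (d : nat)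
    (H : rst n -> pt n -> bool) (rho : rst n) : option (dtree n) :=
  match d with
  | 0 => Some Leaf
  | d'.+1 =>
      let cands :=
        pmap (fun i =>
                if rho i is None then
                  match FindTree S d' H (rset rho i true),
                        FindTree S d' H (rset rho i false) with
                  | Some Tp, Some Tm => Some (Node i Tm Tp)
                  | _, _ => None
                  end
                else None) (enum 'I_n) in
      argmin (fun T => error (compose rho T H) (restr_sample S rho)) cands
  end.

(* Main.v *)
Require Import Defs.
From mathcomp Require Import all_boot all_order all_algebra.
From Stdlib Require List.
Import Order.TTheory GRing.Theory Num.Theory.
Local Open Scope ring_scope.
Set Implicit Arguments. Unset Strict Implicit.

Definition mis (n : nat) (h : pt n -> bool) (S : sample n) : nat :=
  #|[set p in S | h p.1 != p.2]|.

Definition fc (n : nat) (rho : rst n) : nat := #|[set j : 'I_n | rho j == None]|.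

Lemma inr_rset n (x : pt n) (r : rst n) i b :
  r i = None -> inr x (rset r i b) = (x i == b) && inr x r.
Proof.
move=> ri; apply/forallP/andP => [Hx | [xb /forallP Hx] j].
- split; first by have := Hx i; rewrite ffunE eqxx.
  apply/forallP => j; have := Hx j; rewrite ffunE.
  by case: eqVneq => [->|_] //; rewrite ri.
- by rewrite ffunE; case: eqVneq => [->|_] //; apply: Hx.
Qed.

Lemma inr_rset_sub n (x : pt n) (r : rst n) i b :
  inr x r -> x i == b -> inr x (rset r i b).
Proof.
move=> /forallP Hx xb; apply/forallP => j.
by rewrite ffunE; case: eqVneq => [->|_] //; apply: Hx.
Qed.

Lemma cover n (T : dtree n) (x : pt n) : has (inr x) (leaves T).
Proof.
elim: T => [|i Tm IHm Tp IHp] /=.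
  by rewrite orbF; apply/forallP => j; rewrite ffunE.
rewrite has_cat !has_map; case E: (x i).
- apply/orP; right; apply: sub_has IHp => l Hl /=.
  by apply: inr_rset_sub => //; rewrite E.
- apply/orP; left; apply: sub_has IHm => l Hl /=.
  by apply: inr_rset_sub => //; rewrite E.
Qed.

Lemma leaves_free n (T : dtree n) l j :
  l \in leaves T -> j \notin queries T -> l j = None.
Proof.
elim: T l => [|i Tm IHm Tp IHp] l /=.
  by rewrite mem_seq1 => /eqP -> _; rewrite ffunE.
rewrite mem_cat in_cons mem_cat negb_or negb_or => Hl /and3P [ji Hm Hp].
case/orP: Hl => /mapP [l' Hl' ->]; rewrite ffunE (negbTE ji).
  exact: IHm.
exact: IHp.
Qed.

Lemma rcap_rset n (rho l : rst n) i b :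
  rho i = None -> rcap rho (rset l i b) = rcap (rset rho i b) l.
Proof.
move=> ri; apply/ffunP => j; rewrite !ffunE.
by case: eqVneq => [->|ji]; rewrite ?ri.
Qed.

Lemma filter_andb (T : Type) (c : bool) (a : pred T) s :
  filter (fun l => c && a l) s = if c then filter a s else [::].
Proof. by case: c => //; elim: s. Qed.

Lemma head_map_cat (A B : Type) (f : A -> B) d d' (s : seq A) t :
  s <> [::] -> head d (map f s ++ t) = f (head d' s).
Proof. by case: s. Qed.

Lemma filter_nil (T : Type) (a : pred T) s : has a s -> filter a s <> [::].
Proof. by elim: s => //= x s IH; case: (a x). Qed.

Lemma compose_node n (rho : rst n) i Tm Tp H (x : pt n) b :
  rho i = None -> i \notin queries Tm -> i \notin queries Tp -> x i = b ->
  compose rho (Node i Tm Tp) H x = compose (rset rho i b) (if b then Tp else Tm) H x.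
Proof.
move=> ri qm qp xb; rewrite /compose /= filter_cat !filter_map.
have eqm : {in leaves Tm, preim (fun l => rset l i false) (inr x) =1
                (fun l => (x i == false) && inr x l)}.
  by move=> l Hl /=; rewrite inr_rset // (leaves_free Hl qm).
have eqp : {in leaves Tp, preim (fun l => rset l i true) (inr x) =1
                (fun l => (x i == true) && inr x l)}.
  by move=> l Hl /=; rewrite inr_rset // (leaves_free Hl qp).
rewrite (eq_in_filter eqm) (eq_in_filter eqp) !filter_andb xb.
case: b xb => xb /=.
- rewrite -(cats0 (map _ _)).
  rewrite (head_map_cat _ _ (rstar n)); last exact/filter_nil/cover.
  by rewrite rcap_rset.
- rewrite (head_map_cat _ _ (rstar n)); last exact/filter_nil/cover.
  by rewrite rcap_rset.
Qed.

Lemma mis_node n (S : sample n) H (rho : rst n) i Tm Tp :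
  rho i = None -> i \notin queries Tm -> i \notin queries Tp ->
  mis (compose rho (Node i Tm Tp) H) (restr_sample S rho) =
  (mis (compose (rset rho i false) Tm H) (restr_sample S (rset rho i false)) +
   mis (compose (rset rho i true) Tp H) (restr_sample S (rset rho i true)))%N.
Proof.
move=> ri qm qp; rewrite /mis -(cardsID [set p : pt n * bool | p.1 i]) addnC.
congr (_ + _)%N; apply: eq_card => p; rewrite !inE inr_rset //.
- case E: (p.1 i) => /=; first by rewrite !andbF.
  by rewrite (compose_node H ri qm qp E).
- case E: (p.1 i) => /=; last by rewrite !andbF.
  by rewrite (compose_node H ri qm qp E) ?andbT.
Qed.

Lemma fc_rset n (rho : rst n) i b : rho i = None -> fc rho = (fc (rset rho i b)).+1.
Proof.
move=> ri; rewrite /fc (cardsD1 i [set j | rho j == None]) inE ri eqxx add1n.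
congr _.+1; apply: eq_card => j; rewrite !inE ffunE.
by case: eqVneq => [->|_]; rewrite ?ri.
Qed.

Lemma free_rset n (rho : rst n) i b F :
  rho i = None -> free_in (rset rho i b) F = free_in rho F && (i \notin queries F).
Proof.
move=> ri; rewrite /free_in; elim: (queries F) => //= j s IH.
rewrite IH ffunE in_cons; case: (eqVneq j i) => [->|ji]; rewrite ?eqxx ?ri /=; first by rewrite andbF.
by rewrite !andbA.
Qed.

Lemma argminP (A : Type) (f : A -> rat) (s : seq A) : s <> [::] ->
  exists t, [/\ argmin f s = Some t, List.In t s & forall u, List.In u s -> f t <= f u].
Proof.
elim: s => // a s IH _.
case: s IH => [|b s] IH.
  exists a; split => //=; first by left.
  by move=> u [<-|//].
have [//|t [Ht Hin Hmin]] := IH.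
rewrite /=; rewrite /= in Ht; rewrite Ht.
case: (leP (f a) (f t)) => Hat.
- exists a; split => //; first by left.
  move=> u [<-|Hu] //; exact: le_trans Hat (Hmin u Hu).
- exists t; split => //; first by right.
  move=> u [<-|Hu]; [exact: ltW | exact: Hmin].
Qed.

Lemma pmap_In1 (A B : Type) (g : A -> option B) s u :
  List.In u (pmap g s) -> exists a, List.In a s /\ g a = Some u.
Proof.
elim: s => //= a s IH; case E: (g a) => [v|] /=.
  move=> [<-|Hu]; first by exists a; split => //; left.
  by have [a' [H1 H2]] := IH Hu; exists a'; split => //; right.
by move=> Hu; have [a' [H1 H2]] := IH Hu; exists a'; split => //; right.
Qed.

Lemma pmap_In2 (A B : Type) (g : A -> option B) s a u :
  List.In a s -> g a = Some u -> List.In u (pmap g s).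
Proof.
elim: s => //= b s IH [<-|Ha] Hg /=; first by rewrite Hg; left.
case: (g b) => [v|] /=; last exact: IH.
by right; apply: IH.
Qed.

Lemma in_In (T : eqType) (x : T) s : x \in s -> List.In x s.
Proof.
elim: s => //= y s IH; rewrite in_cons => /orP [/eqP ->|H]; first by left.
by right; apply: IH.
Qed.

Lemma error_mis n (h1 h2 : pt n -> bool) S :
  error h1 S <= error h2 S -> (mis h1 S <= mis h2 S)%N.
Proof.
rewrite /error /mis.
case: (posnP #|S|) => [S0|Sp].
  have : (#|[set p in S | h1 p.1 != p.2]| <= #|S|)%N.
    by apply: subset_leq_card; apply/subsetP => p; rewrite inE => /andP [].
  by rewrite S0 leqn0 => /eqP ->.
by rewrite ler_pM2r ?invr_gt0 ?ltr0n // ler_nat.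
Qed.

Lemma main n (S : sample n) H d : forall rho : rst n, (d <= fc rho)%N ->
  exists T, [/\ FindTree S d H rho = Some T, is_tree d T, free_in rho T &
    forall T', is_tree d T' -> free_in rho T' ->
      (mis (compose rho T H) (restr_sample S rho) <=
       mis (compose rho T' H) (restr_sample S rho))%N].
Proof.
elim: d => [|d IH] rho hd.
  by exists Leaf; split => //; case.
have gi : forall i b, rho i = None -> exists T, [/\ FindTree S d H (rset rho i b) = Some T,
    is_tree d T, free_in (rset rho i b) T &
    forall T', is_tree d T' -> free_in (rset rho i b) T' ->
      (mis (compose (rset rho i b) T H) (restr_sample S (rset rho i b)) <=
       mis (compose (rset rho i b) T' H) (restr_sample S (rset rho i b)))%N].
  move=> i b ri; apply: IH; by move: hd; rewrite (fc_rset b ri).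
rewrite /=.
set g := (fun i : 'I_n => _).

have gE : forall i, rho i = None -> exists Tm Tp, g i = Some (Node i Tm Tp) /\
   (exists2 Tm', FindTree S d H (rset rho i false) = Some Tm' & Tm' = Tm) /\
   (exists2 Tp', FindTree S d H (rset rho i true) = Some Tp' & Tp' = Tp).
  move=> i ri; have [Tm [Hm _ _ _]] := gi i false ri; have [Tp [Hp _ _ _]] := gi i true ri.
  exists Tm, Tp; rewrite /g ri Hm Hp; split => //; split; [exists Tm|exists Tp] => //.
have [i0 Hi0] : exists i0, rho i0 = None.
  have : (0 < fc rho)%N by apply: leq_trans hd.
  by case/card_gt0P => i; rewrite inE => /eqP; exists i.
have [Tm0 [Tp0 [g0 _]]] := gE i0 Hi0.
have ne : pmap g (enum 'I_n) <> [::].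
  move=> E; have := pmap_In2 (in_In (mem_enum _ i0)) g0.
  by rewrite E.
have [t [Ht Hin Hmin]] := argminP (fun T => error (compose rho T H) (restr_sample S rho)) ne.
have [i [_ Hgi]] := pmap_In1 Hin.
case ri: (rho i) => [c|]; first by rewrite /g ri in Hgi.
have [Tm [Hm isTm frm optm]] := gi i false ri.
have [Tp [Hp isTp frp optp]] := gi i true ri.
move: Hgi; rewrite /g ri Hm Hp => -[Et]; subst t.
move: frm frp; rewrite !free_rset // => /andP [frm qm] /andP [frp qp].
exists (Node i Tm Tp); split => //.
- by rewrite /= isTm isTp qm qp.
- by rewrite /free_in /= ri eqxx /= all_cat; apply/andP; split.
case => // j Tm' Tp' /= /and4P [isTm' isTp' qm' qp'].
rewrite /free_in /= all_cat => /and3P [/eqP rj frm' frp'].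
have [Fm [HFm isFm frFm optFm]] := gi j false rj.
have [Fp [HFp isFp frFp optFp]] := gi j true rj.
have Hc : List.In (Node j Fm Fp) (pmap g (enum 'I_n)).
  by apply: (pmap_In2 (in_In (mem_enum _ j))); rewrite /g rj HFm HFp.
have := error_mis (Hmin _ Hc); move/leq_trans; apply.
move: frFm frFp; rewrite !free_rset // => /andP [_ qFm] /andP [_ qFp].
rewrite !mis_node //; apply: leq_add.
  by apply: optFm => //; rewrite free_rset //; apply/andP; split.
by apply: optFp => //; rewrite free_rset //; apply/andP; split.
Qed.

Theorem claim6p5 (n : nat) (S : sample n) (d : nat)
    (H : rst n -> pt n -> bool) (rho : rst n) :
  (d <= #|[set i : 'I_n | rho i == None]|)%N ->
  exists T : dtree n,
    [/\ FindTree S d H rho = Some T,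
        is_tree d T, free_in rho T &
        forall T' : dtree n, is_tree d T' -> free_in rho T' ->
          error (compose rho T H) (restr_sample S rho)
          <= error (compose rho T' H) (restr_sample S rho)].
Proof.
move=> hd; have [T [H1 H2 H3 H4]] := main S H hd.
exists T; split => // T' i1 i2.
rewrite /error ler_wpM2r ?invr_ge0 ?ler0n // ler_nat.
exact: H4.
Qed.
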